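(* The $K$-linear map $\Phi:H\to (K\oplus KY)^{2g+1}$, $\Phi(m_c)=\big(b^{\lambda_i}_{0,0}+Y\,b^{\lambda_i}_{1,0}\big)_{i=1,\dots,2g+1}$, which records the constant terms of the local components of $m_c$ at the finite points $\lambda_1,\dots,\lambda_{2g+1}$, is injective.
   Context: Standing setup. Let $k$ be a finite field of odd characteristic $p$, $W(k)$ its ring of Witt vectors, $K$ the fraction field of $W(k)$, $|\cdot|$ the $p$-adic absolute value. Let $g\ge1$ and let $\lambda_1,\dots,\lambda_{2g+1}\in W(k)$ have pairwise distinct reductions modulo $p$. Put $Q(t)=\prod_{i=1}^{2g+1}(t-\lambda_i)$ and $h(t)=\frac{Q'(t)}{2Q(t)}$. Let $\Lambda=\{\lambda_1,\dots,\lambda_{2g+1},\infty\}$, $\Lambda_0=\Lambda\setminus\{\infty\}$. The local parameter at $\lambda\in\Lambda_0$ is $s_\lambda=t-\lambda$, and at $\infty$ it is $s_\infty=t^{-1}$. Let $B_K^\dagger$ be the ring of series $\sum_{\underline\ell\ge0}a_{\underline\ell}\,t^{\ell_0}\prod_{i}(t-\lambda_i)^{-\ell_i}$ ($a_{\underline\ell}\in K$) for which there is $\eta>1$ with $|a_{\underline\ell}|\eta^{\max_i\ell_i}\to0$; $\phi_\lambda(f)$ is the Laurent expansion of $f\in B_K^\dagger$ in $s_\lambda$. The principal part is $\Pr_\lambda(\sum a_\ell s_\lambda^\ell)=\sum_{\ell<0}a_\ell s_\lambda^\ell$ for $\lambda\in\Lambda_0$ and $\Pr_\infty(\sum a_\ell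 s_\infty^\ell)=\sum_{\ell\le0}a_\ell s_\infty^\ell$; its expansion at another point $\mu$ is denoted $\phi_\mu(\cdot)$. For $\lambda\in\Lambda_0$, $\tilde R_{\lambda,c}$ is the space of $\sum_{\ell\ge0}a_\ell s_\lambda^\ell$ with $|a_\ell|\eta^\ell\to0$ for all $\eta<1$, and $R_{\infty,c}$ the analogous space of $\sum_{\ell\ge1}a_\ell s_\infty^\ell$. $B_c=\prod_{\lambda\in\Lambda_0}\tilde R_{\lambda,c}\times R_{\infty,c}$ is a $B_K^\dagger$-module via $(f\cdot G)^\mu=\phi_\mu(f)G^\mu-\sum_{\lambda\in\Lambda}\phi_\mu\big(\Pr_\lambda(\phi_\lambda(f)G^\lambda)\big)$. Let $A_K^\dagger=B_K^\dagger\oplus B_K^\dagger Y$ with $Y^2=Q(t)$, $\nabla_{GM}(1)=0$, $\nabla_{GM}(Y)=hY$; $M_c=A_K^\dagger\otimes_{B_K^\dagger}B_c$ with elements $m_c=1\otimes G_0+Y\otimes G_1$ ($G_0,G_1\in B_c$) and $\nabla_c(m_c)=1\otimes\partial_tG_0+Y\otimes(\partial_tG_1+h\cdot G_1)$, $\partial_t$ acting componentwise (as $-s_\infty^2\,d/ds_\infty$ on series in $s_\infty$). $H=\ker\nabla_c$ (the space $H^1_{MW,c}(V,\pi_*A_K^\dagger)$). Local components: $m_\lambda=G_0^\lambda+YG_1^\lambda=\sum_{j=0,1}Y^j\sum_{\ell\ge0}b^\lambda_{j,\ell}s_\lambda^\ell$ with $b^\infty_{j,0}=0$. *)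

(* Defs.v *)
From HB Require Import structures.
From mathcomp Require Import all_boot all_order all_algebra.
Set Implicit Arguments. Unset Strict Implicit. Unset Printing Implicit Defensive.
Import Order.TTheory GRing.Theory Num.Theory.
Local Open Scope ring_scope.

(* The base field K = Frac W(k), given axiomatically (Cohen structure   *)
(* theorem): a field with a rational-valued absolute value which is     *)
(* the normalized p-adic one (|p| = 1/p), non-archimedean, complete,    *)
(* discrete with uniformizer p (unramified), whose residue field        *)
(* k = W/pW (W = {|x| <= 1}) is finite, p an odd prime.                 *)
Definition padic_setting (K : fieldType) (abs : K -> rat) (p : nat) : Prop :=
  (prime p /\ odd p) /\
  (forall x, 0 <= abs x) /\ (forall x, abs x = 0 <-> x = 0) /\
  (forall x y, abs (x * y) = abs x * abs y) /\
  (forall x y, abs (x + y) <= Num.max (abs x) (abs y)) /\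
  (* normalized p-adic absolute value; p is a uniformizer (unramified) *)
  abs (p%:R) = (p%:R)^-1 /\
  (forall x, abs x < 1 -> exists w, abs w <= 1 /\ x = p%:R * w) /\
  (forall u : nat -> K,
      (forall eps : rat, 0 < eps -> exists N, forall m n, (N <= m)%N -> (N <= n)%N ->
          abs (u m - u n) < eps) ->
      exists l, forall eps : rat, 0 < eps -> exists N, forall n, (N <= n)%N ->
          abs (u n - l) < eps) /\
  (* the residue field k = W/pW is finite *)
  (exists s : seq K, forall x, abs x <= 1 ->
      exists r, r \in s /\ exists w, abs w <= 1 /\ x - r = p%:R * w).

Definition inW (K : fieldType) (abs : K -> rat) (x : K) := abs x <= 1.
Definition same_red (K : fieldType) (abs : K -> rat) (p : nat) (x y : K) :=
  exists w, abs w <= 1 /\ x - y = p%:R * w.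

(* Laurent series in a local parameter s: a pair (d, a) represents      *)
(* sum_{k>=0} a_k s^(k-d).                                               *)
Section Laurent.
Variable K : fieldType.

Definition laur := (nat * (nat -> K))%type.

Definition lcoef (L : laur) (e : int) : K :=
  match (e + (L.1)%:Z)%R with Posz k => L.2 k | Negz _ => 0 end.

Definition lzero : laur := (0%N, fun _ => 0).
Definition lone : laur := (0%N, fun k => (k == 0%N)%:R).
Definition lser (a : nat -> K) : laur := (0%N, a).
Definition lscale (c : K) (L : laur) : laur := (L.1, fun k => c * L.2 k).
Definition ladd (L1 L2 : laur) : laur :=
  let D := maxn L1.1 L2.1 in
  (D, fun k => (if (D - L1.1 <= k)%N then L1.2 (k - (D - L1.1))%N else 0)
             + (if (D - L2.1 <= k)%N then L2.2 (k - (D - L2.1))%N else 0)).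
Definition lmul (L1 L2 : laur) : laur :=
  ((L1.1 + L2.1)%N, fun k => \sum_(i < k.+1) L1.2 i * L2.2 (k - i)%N).
Definition lpow (L : laur) (k : nat) : laur := iter k (lmul L) lone.
Definition lsum (s : seq laur) : laur := foldr ladd lzero s.

End Laurent.

(* Points of Lambda: Some i = lambda_i (i : 'I_n), None = infinity.     *)
Section Setting.
Variables (K : fieldType) (n : nat) (lam : 'I_n -> K).

Definition pt := option 'I_n.

Definition phi_t (mu : pt) : laur K :=
  match mu with
  | Some j => (0%N, fun k => if k == 0%N then lam j else (k == 1%N)%:R)
  | None => (1%N, fun k => (k == 0%N)%:R)          (* t = s_inf^-1 *)
  end.

(* phi_mu((t - lambda_i)^-1) *)
Definition phi_recip (mu : pt) (i : 'I_n) : laur K :=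
  match mu with
  | Some j => if j == i then (1%N, fun k => (k == 0%N)%:R)
              else (0%N, fun l => (-1) ^+ l * (lam j - lam i) ^- l.+1)
  | None => (0%N, fun k => if k is k'.+1 then lam i ^+ k' else 0)
  end.

(* Elements of B_K^dagger that are finite sums of the defining monomials:
   (c, l0, l) stands for c * t^l0 * prod_i (t - lambda_i)^(-l_i). *)
Definition bfin := seq (K * nat * ('I_n -> nat)).

Definition phi (mu : pt) (f : bfin) : laur K :=
  lsum [seq lscale m.1.1
          (lmul (lpow (phi_t mu) m.1.2)
                (foldr (fun i L => lmul (lpow (phi_recip mu i) (m.2 i)) L)
                       (lone K) (enum 'I_n)))
       | m <- f].

(* phi_mu(s_lambda^-1) : s_lambda^-1 = (t-lambda)^-1, resp. t at infinity *)
Definition phi_sinv (mu lambda : pt) : laur K :=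
  match lambda with Some i => phi_recip mu i | None => phi_t mu end.

(* phi_mu(Pr_lambda(F)) for a Laurent series F in s_lambda:
   Pr_lambda keeps exponents < 0 (finite lambda), resp. <= 0 (infinity). *)
Definition phi_Pr (mu lambda : pt) (F : laur K) : laur K :=
  let lo := if lambda is Some _ then 1%N else 0%N in
  lsum [seq lscale (F.2 (F.1 - k)%N) (lpow (phi_sinv mu lambda) k)
       | k <- iota lo (F.1.+1 - lo)].

(* B_c-components : G mu = coefficient sequence of G^mu in s_mu *)
Definition bcomp := pt -> nat -> K.

(* (f . G)^mu, as coefficient function of the exponent *)
Definition act (f : bfin) (G : bcomp) (mu : pt) (e : int) : K :=
  lcoef (lmul (phi mu f) (lser (G mu))) e
  - \sum_(lambda : pt) lcoef (phi_Pr mu lambda (lmul (phi lambda f) (lser (G lambda)))) e.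

(* partial_t componentwise: d/ds at finite points, -s^2 d/ds at infinity *)
Definition dser (mu : pt) (a : nat -> K) (e : int) : K :=
  match mu, e with
  | Some _, Posz k => k.+1%:R * a k.+1
  | None, Posz k.+1 => - (k%:R * a k)
  | _, _ => 0
  end.

(* h = Q'/(2Q) = (1/2) sum_i (t - lambda_i)^-1 as an element of B_K^dagger *)
Definition hB : bfin :=
  [seq ((2%:R)^-1, 0%N, fun j => (i == j : nat)) | i <- enum 'I_n].

Definition conv_open (abs : K -> rat) (a : nat -> K) :=
  forall eta : rat, 0 < eta < 1 ->
    forall eps : rat, 0 < eps -> exists N, forall l, (N <= l)%N ->
      abs (a l) * eta ^+ l < eps.

Definition inBc (abs : K -> rat) (G : bcomp) :=
  (forall mu, conv_open abs (G mu)) /\ G None 0%N = 0.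

(* m_c = 1 (x) G0 + Y (x) G1 lies in H = ker nabla_c *)
Definition inH (abs : K -> rat) (G0 G1 : bcomp) :=
  [/\ inBc abs G0, inBc abs G1 &
      forall mu e, dser mu (G0 mu) e = 0 /\ dser mu (G1 mu) e + act hB G1 mu e = 0].

(* Phi(m_c)_i = b^{lambda_i}_{0,0} + Y b^{lambda_i}_{1,0}, as a pair *)
Definition PhiMap (G0 G1 : bcomp) (i : 'I_n) : K * K :=
  (G0 (Some i) 0%N, G1 (Some i) 0%N).

End Setting.

(* Main.v *)
Require Import Defs.
From HB Require Import structures.
From mathcomp Require Import all_boot all_order all_algebra.
From Stdlib Require Import Lia FunctionalExtensionality.
Import Order.TTheory GRing.Theory Num.Theory.
Local Open Scope ring_scope.

Ltac nlia := rewrite -?minusE -?plusE; lia.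

Section Aux.
Variable K : fieldType.
Implicit Types L : laur K.

Lemma lcoef_pos L (m : nat) : lcoef L (Posz m) = L.2 (m + L.1)%N.
Proof. by rewrite /lcoef -PoszD. Qed.

Lemma lcoef_neg L (m : nat) :
  lcoef L (Negz m) = if (m < L.1)%N then L.2 (L.1 - m.+1)%N else 0.
Proof.
rewrite /lcoef NegzE; case: ltnP => h.
  by rewrite addrC subzn.
have -> : - (m.+1)%:Z + (L.1)%:Z = Negz (m - L.1)%N.
  rewrite NegzE -subSn // -subzn; last by apply: leqW.
  by rewrite opprB addrC.
done.
Qed.

Lemma lcoef_ladd L1 L2 e : lcoef (ladd L1 L2) e = lcoef L1 e + lcoef L2 e.
Proof.
case: L1 L2 => [d1 f1] [d2 f2].
have hD1 : (d1 <= maxn d1 d2)%N by apply: leq_maxl.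
have hD2 : (d2 <= maxn d1 d2)%N by apply: leq_maxr.
move: hD1 hD2; rewrite /ladd /=; set D := maxn d1 d2 => hD1 hD2; clearbody D.
case: e => m.
- rewrite !lcoef_pos /=.
  have -> : (D - d1 <= m + D)%N by apply/ssrnat.leP; move/ssrnat.leP: hD1; nlia.
  have -> : (D - d2 <= m + D)%N by apply/ssrnat.leP; move/ssrnat.leP: hD2; nlia.
  have -> : (m + D - (D - d1) = m + d1)%N by move/ssrnat.leP: hD1; nlia.
  have -> : (m + D - (D - d2) = m + d2)%N by move/ssrnat.leP: hD2; nlia.
  done.
- rewrite !lcoef_neg /=.
  case: (ltnP m D) => hm.
  + have e1 : (D - d1 <= D - m.+1)%N = (m < d1)%N.
      apply/idP/idP => /ssrnat.leP h; apply/ssrnat.leP; move: h; move/ssrnat.leP: hD1; move/ssrnat.leP: hm; nlia.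
    have e2 : (D - d2 <= D - m.+1)%N = (m < d2)%N.
      apply/idP/idP => /ssrnat.leP h; apply/ssrnat.leP; move: h; move/ssrnat.leP: hD2; move/ssrnat.leP: hm; nlia.
    rewrite e1 e2.
    case: (ltnP m d1) => h1; case: (ltnP m d2) => h2; rewrite ?addr0 ?add0r //.
    * have -> : (D - m.+1 - (D - d1) = d1 - m.+1)%N by move/ssrnat.leP: hD1; move/ssrnat.leP: hm; move/ssrnat.leP: h1; nlia.
      have -> : (D - m.+1 - (D - d2) = d2 - m.+1)%N by move/ssrnat.leP: hD2; move/ssrnat.leP: hm; move/ssrnat.leP: h2; nlia.
      done.
    * have -> : (D - m.+1 - (D - d1) = d1 - m.+1)%N by move/ssrnat.leP: hD1; move/ssrnat.leP: hm; move/ssrnat.leP: h1; nlia.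
      done.
    * have -> : (D - m.+1 - (D - d2) = d2 - m.+1)%N by move/ssrnat.leP: hD2; move/ssrnat.leP: hm; move/ssrnat.leP: h2; nlia.
      done.
  + have -> : (m < d1)%N = false by apply/negbTE; rewrite -leqNgt (leq_trans hD1 hm).
    have -> : (m < d2)%N = false by apply/negbTE; rewrite -leqNgt (leq_trans hD2 hm).
    by rewrite addr0.
Qed.

Lemma lcoef_lzero e : lcoef (lzero K) e = 0.
Proof. by rewrite /lcoef; case: (e + _). Qed.

Lemma lcoef_lsum (s : seq (laur K)) e :
  lcoef (lsum s) e = \sum_(L <- s) lcoef L e.
Proof.
elim: s => [|L s IH]; first by rewrite big_nil lcoef_lzero.
by rewrite big_cons /= lcoef_ladd IH.
Qed.

Lemma lcoef_lscale c L e : lcoef (lscale c L) e = c * lcoef L e.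
Proof. by rewrite /lcoef /=; case: (e + _) => //; rewrite mulr0. Qed.

Lemma lmul1l L : lmul (lone K) L = L.
Proof.
case: L => d f; rewrite /lmul /= add0n; congr pair.
apply: functional_extensionality => k.
rewrite big_ord_recl /= subn0 mul1r big1 ?addr0 // => i _.
by rewrite mul0r.
Qed.

Lemma lmul1r L : lmul L (lone K) = L.
Proof.
case: L => d f; rewrite /lmul /= addn0; congr pair.
apply: functional_extensionality => k.
rewrite big_ord_recr /= subnn mulr1 big1 ?add0r // => i _.
have -> : (k - i == 0)%N = false.
  by apply/negbTE; rewrite subn_eq0 -ltnNge ltn_ord.
by rewrite mulr0.
Qed.

Lemma lsum_shift (s : seq (laur K)) : (lsum s).1 = foldr maxn 0%N (map fst s).
Proof. by elim: s => //= L s ->. Qed.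

Lemma lmul_coef0 L1 L2 : (lmul L1 L2).2 0%N = L1.2 0%N * L2.2 0%N.
Proof. by rewrite /lmul /= big_ord1. Qed.

Lemma lpow0 L : lpow L 0 = lone K. Proof. by []. Qed.
Lemma lpow1 L : lpow L 1 = L. Proof. by rewrite /lpow /= lmul1r. Qed.

Lemma foldr_notin (I : eqType) (X : I -> laur K) i (s : seq I) :
  i \notin s ->
  foldr (fun i0 => [eta lmul (lpow (X i0) (i == i0))]) (lone K) s = lone K.
Proof.
elim: s => //= j s IH; rewrite in_cons negb_or => /andP[/negbTE -> /IH ->].
by rewrite lpow0 lmul1l.
Qed.

Lemma foldr_in (I : eqType) (X : I -> laur K) i (s : seq I) :
  i \in s -> uniq s ->
  foldr (fun i0 => [eta lmul (lpow (X i0) (i == i0))]) (lone K) s = X i.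
Proof.
elim: s => //= j s IH; rewrite in_cons => /orP[/eqP <-|hi] /andP[hn hu].
  by rewrite eqxx lpow1 foldr_notin // lmul1r.
have -> : (i == j) = false by apply/negbTE; apply/eqP => e; move: hn; rewrite -e hi.
by rewrite lpow0 lmul1l IH.
Qed.

End Aux.

Section S.
Variables (K : fieldType) (n : nat) (lam : 'I_n -> K).

Lemma phi_hB mu : phi lam mu (hB K n) =
  lsum [seq lscale (2%:R)^-1 (phi_recip lam mu i) | i <- enum 'I_n].
Proof.
rewrite /phi /hB -map_comp; congr lsum; apply: eq_map => i /=.
by rewrite lmul1l foldr_in ?mem_enum ?enum_uniq.
Qed.

Lemma PrEq mu a a' (A : laur K) l :
  (A.1 <= (if l is Some _ then 1 else 0))%N -> a 0%N = a' 0%N ->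
  phi_Pr lam mu l (lmul A (lser a)) = phi_Pr lam mu l (lmul A (lser a')).
Proof.
move=> hA ha; rewrite /phi_Pr.
have e1 : (lmul A (lser a)).1 = A.1 by rewrite /= addn0.
have e2 : (lmul A (lser a')).1 = A.1 by rewrite /= addn0.
rewrite e1 e2; congr lsum; apply/eq_in_map => k; rewrite mem_iota => /andP[hk _].
have -> : (A.1 - k = 0)%N.
  apply/eqP; rewrite subn_eq0; apply: leq_trans hA _; by case: l hk.
by rewrite !lmul_coef0 /= ha.
Qed.

Lemma shift_A_some j : (phi lam (Some j) (hB K n)).1 = 1%N.
Proof.
rewrite phi_hB lsum_shift -map_comp.
have -> : [seq (fst \o (fun i => lscale 2^-1 (phi_recip lam (Some j) i))) i | i <- enum 'I_n]
   = [seq (j == i : nat) | i <- enum 'I_n].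
  by apply: eq_map => i /=; case: (j == i).
have : j \in enum 'I_n by rewrite mem_enum.
elim: (enum 'I_n) => //= i s IH; rewrite in_cons => /orP[/eqP ->|h].
  rewrite eqxx /=. apply/eqP; rewrite eqn_leq leq_maxl andbT geq_max leqnn /=.
  elim: s {IH} => //= x s IH2; rewrite geq_max IH2 andbT.
  by case: (i == x).
rewrite IH //; case: (j == i) => //.
Qed.

Lemma shift_A_none : (phi lam None (hB K n)).1 = 0%N.
Proof.
rewrite phi_hB lsum_shift -map_comp.
by elim: (enum 'I_n) => //= i s ->.
Qed.

Lemma lcoef_A mu e : lcoef (phi lam mu (hB K n)) e =
  \sum_(i <- enum 'I_n) (2%:R)^-1 * lcoef (phi_recip lam mu i) e.
Proof. by rewrite phi_hB lcoef_lsum big_map; apply: eq_bigr => i _; rewrite lcoef_lscale. Qed.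

Lemma A0_some j : (phi lam (Some j) (hB K n)).2 0%N = (2%:R)^-1.
Proof.
have e : lcoef (phi lam (Some j) (hB K n)) (Negz 0) = (phi lam (Some j) (hB K n)).2 0%N.
  by rewrite lcoef_neg shift_A_some.
rewrite -e lcoef_A big_enum /= (bigD1 j) //= big1 ?addr0.
  by rewrite eqxx lcoef_neg /= mulr1.
move=> i hi; rewrite eq_sym in hi; rewrite (negbTE hi) lcoef_neg /=.
by rewrite mulr0.
Qed.

Lemma A01_none : (phi lam None (hB K n)).2 0%N = 0 /\ (phi lam None (hB K n)).2 1%N = (2%:R)^-1 *+ n.
Proof.
have e0 : lcoef (phi lam None (hB K n)) 0 = (phi lam None (hB K n)).2 0%N.
  by rewrite lcoef_pos shift_A_none.
have e1 : lcoef (phi lam None (hB K n)) 1 = (phi lam None (hB K n)).2 1%N.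
  by rewrite lcoef_pos shift_A_none.
split.
  by rewrite -e0 lcoef_A big1 // => i _; rewrite lcoef_pos /= mulr0.
rewrite -e1 lcoef_A big_enum /=.
rewrite (eq_bigr (fun _ => (2%:R)^-1)); last by move=> i _; rewrite lcoef_pos /= expr0 mulr1.
by rewrite sumr_const card_ord.
Qed.

Lemma eq_some j (a : nat -> K) k :
  dser (Some j) a (Posz k) + lcoef (lmul (phi lam (Some j) (hB K n)) (lser a)) (Posz k)
  = (k.+1%:R + (2%:R)^-1) * a k.+1 +
    \sum_(i < k.+1) (phi lam (Some j) (hB K n)).2 i.+1 * a (k - i)%N.
Proof.
rewrite lcoef_pos /=.
have -> : (k + ((phi lam (Some j) (hB K n)).1 + 0))%N = k.+1 by rewrite shift_A_some addn0 addn1.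
rewrite big_ord_recl /= subn0 A0_some mulrDl addrA.
by congr (_ + _); apply: eq_bigr => i _; rewrite subSS.
Qed.

Lemma eq_none (a : nat -> K) k :
  @dser K n None a (Posz k.+2) + lcoef (lmul (phi lam None (hB K n)) (lser a)) (Posz k.+2)
  = ((2%:R)^-1 *+ n - k.+1%:R) * a k.+1 +
    \sum_(i < k.+1) (phi lam None (hB K n)).2 i.+2 * a (k - i)%N.
Proof.
rewrite lcoef_pos /=.
have -> : (k.+2 + ((phi lam None (hB K n)).1 + 0))%N = k.+2 by rewrite shift_A_none !addn0.
have [h0 h1] := A01_none.
rewrite big_ord_recl big_ord_recl /= subn0 h0 mul0r add0r subSS subn0 h1.
rewrite addrA mulrBl [- _ + _]addrC.
by congr (_ + _); apply: eq_bigr => i _; rewrite /bump /= !add1n !subSS.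
Qed.

End S.

Lemma rec_unique (K : fieldType) (a a' c A : nat -> K) :
  a 0%N = a' 0%N -> (forall k, c k != 0) ->
  (forall k, c k * a k.+1 + \sum_(i < k.+1) A i * a (k - i)%N
           = c k * a' k.+1 + \sum_(i < k.+1) A i * a' (k - i)%N) -> a = a'.
Proof.
move=> h0 hc he.
suff H : forall k m, (m <= k)%N -> a m = a' m.
  by apply: functional_extensionality => m; apply: (H m).
elim=> [|k IH] m hm.
  by move: hm; rewrite leqn0 => /eqP ->.
move: hm; rewrite leq_eqVlt => /orP[/eqP ->|hm]; last by apply: IH.
have := he k.
rewrite (eq_bigr (fun i : 'I_k.+1 => A i * a' (k - i)%N)); last first.
  by move=> i _; rewrite IH // leq_subr.
by move/addIr/(mulfI (hc k)).
Qed.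

Lemma abs_expr (K : fieldType) (abs : K -> rat) :
  (forall x y, abs (x * y) = abs x * abs y) -> abs 1 = 1 ->
  forall x k, abs (x ^+ k) = abs x ^+ k.
Proof. move=> hm h1 x; elim=> [|k IH]; by rewrite ?expr0 // !exprS hm IH. Qed.

Lemma char0_of (K : fieldType) (abs : K -> rat) (p : nat) :
  padic_setting abs p -> forall m : nat, (m%:R == 0 :> K) = (m == 0)%N.
Proof.
case=> [[pp op] [h0 [hz [hm [_ [hp _]]]]]].
have h1 : abs 1 = 1.
  have : abs 1 = abs 1 * abs 1 by rewrite -hm mulr1.
  have : abs 1 != 0 by apply/eqP => /hz /eqP; rewrite oner_eq0.
  move=> nz e. by apply: (mulIf nz); rewrite mul1r -e.
apply/(pcharf0P K) => q; apply/negbTE/negP => hq.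
have := pFrobenius_aut_nat hq p; rewrite pFrobenius_autE => e.
have := f_equal abs e; rewrite abs_expr // hp.
have q2 : (1 < q)%N by apply: prime_gt1; exact: (pcharf_prime hq).
case: q q2 {hq e} => [|[|q']] // _.
rewrite exprS => e2.
have pnz : (p%:R : rat)^-1 != 0 by rewrite invr_eq0 pnatr_eq0 -lt0n prime_gt0.
have : (p%:R : rat)^-1 ^+ q'.+1 = 1 by apply: (mulfI pnz) ; rewrite mulr1.
move/eqP; apply/negP; rewrite neq_lt; apply/orP; left.
rewrite exprn_ilt1 //. 
- by rewrite invr_ge0 ler0n.
- rewrite invf_lt1 ?ltr0n ?prime_gt0 // ltr1n prime_gt1 //.
Qed.

Lemma natr_inj0 (K : fieldType) (hc : forall m : nat, (m%:R == 0 :> K) = (m == 0)%N)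
  (a b : nat) : (a%:R : K) = b%:R -> a = b.
Proof.
wlog h : a b / (a <= b)%N.
  move=> W e; case: (leqP a b) => hab; first exact: W.
  by apply/esym/W; [apply: ltnW|].
rewrite -(subnKC h) natrD -{1}[a%:R]addr0 => /addrI /esym /eqP.
by rewrite hc => /eqP ->; rewrite addn0.
Qed.

Lemma sol_eq (K : fieldType) (x y C : K) : x + (y - C) = 0 -> x + y = C.
Proof. by move/eqP; rewrite addrA subr_eq0 => /eqP. Qed.

Theorem mainTheorem3 (K : fieldType) (abs : K -> rat) (p g : nat)
  (lam : 'I_(2 * g).+1 -> K) :
  padic_setting abs p ->
  (0 < g)%N ->
  (forall i, inW abs (lam i)) ->
  (forall i j, i != j -> ~ same_red abs p (lam i) (lam j)) ->
  forall G0 G1 G0' G1' : bcomp K ((2 * g).+1),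
    inH lam abs G0 G1 -> inH lam abs G0' G1' ->
    (forall i, PhiMap G0 G1 i = PhiMap G0' G1' i) ->
    G0 = G0' /\ G1 = G1'.
Proof.
move=> hps _ _ _ G0 G1 G0' G1' [[_ h0i] [_ h1i] hE] [[_ h0i'] [_ h1i'] hE'] hPhi.
have hc := @char0_of K abs p hps.
have nz : forall m : nat, (m.+1%:R : K) != 0 by move=> m; rewrite hc.
have hP0 : forall i, G0 (Some i) 0%N = G0' (Some i) 0%N by move=> i; case: (hPhi i).
have hP1 : forall i, G1 (Some i) 0%N = G1' (Some i) 0%N by move=> i; case: (hPhi i).
split.
  have Z : forall G : bcomp K ((2 * g).+1), G None 0%N = 0 ->
      (forall mu e, dser mu (G mu) e = 0) ->
      (forall i k, G (Some i) k.+1 = 0) /\ (forall k, G None k = 0).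
    move=> G hG hd; split.
      move=> i k; have := hd (Some i) (Posz k) => /= /eqP.
      by rewrite mulf_eq0 (negbTE (nz k)) => /eqP.
    case=> // k; have := hd None (Posz k.+2) => /= /eqP.
    by rewrite oppr_eq0 mulf_eq0 (negbTE (nz k)) => /eqP.
  have [Z1 Z2] := Z G0 h0i (fun mu e => (hE mu e).1).
  have [Z1' Z2'] := Z G0' h0i' (fun mu e => (hE' mu e).1).
  apply: functional_extensionality => -[i|]; apply: functional_extensionality => -[|k].
  - exact: hP0.
  - by rewrite Z1 Z1'.
  - by rewrite Z2 Z2'.
  - by rewrite Z2 Z2'.
have hCorr : forall mu e,
  \sum_(l : pt ((2 * g).+1)) lcoef (phi_Pr lam mu l (lmul (phi lam l (hB K _)) (lser (G1 l)))) e
  = \sum_(l : pt ((2 * g).+1)) lcoef (phi_Pr lam mu l (lmul (phi lam l (hB K _)) (lser (G1' l)))) e.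
  move=> mu e; apply: eq_bigr => -[i|] _.
    have s1 : ((phi lam (Some i) (hB K (2 * g).+1)).1 <= 1)%N by rewrite shift_A_some.
    by rewrite (@PrEq K _ lam mu (G1 (Some i)) (G1' (Some i)) _ (Some i) s1 (hP1 i)).
  have s1 : ((phi lam None (hB K (2 * g).+1)).1 <= 0)%N by rewrite shift_A_none.
  have s2 : G1 None 0%N = G1' None 0%N by rewrite h1i h1i'.
  by rewrite (@PrEq K _ lam mu (G1 None) (G1' None) _ None s1 s2).
have key : forall mu e,
  dser mu (G1 mu) e + lcoef (lmul (phi lam mu (hB K _)) (lser (G1 mu))) e
  = dser mu (G1' mu) e + lcoef (lmul (phi lam mu (hB K _)) (lser (G1' mu))) e.
  move=> mu e; rewrite (@sol_eq K _ _ _ (hE mu e).2) (@sol_eq K _ _ _ (hE' mu e).2).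
  exact: hCorr.
apply: functional_extensionality => -[j|].
  apply: (@rec_unique K _ _ (fun k => k.+1%:R + (2%:R)^-1) (fun i => (phi lam (Some j) (hB K _)).2 i.+1) (hP1 j)) => [k|k].
    apply/negP => /eqP h.
    have := congr1 (fun x => 2%:R * x) h.
    rewrite mulr0 mulrDr mulfV ?hc // -natrM natr1 => /eqP.
    by rewrite hc.
  by rewrite -!eq_some; apply: key.
apply: (@rec_unique K _ _ (fun k => (2%:R)^-1 *+ (2 * g).+1 - k.+1%:R) (fun i => (phi lam None (hB K _)).2 i.+2) (_ : G1 None 0%N = G1' None 0%N)) => [|k|k].
- by rewrite h1i h1i'.
- apply/negP => /eqP h.
  have := congr1 (fun x => 2%:R * x) h.
  rewrite mulr0 mulrBr mulrnAr mulfV ?hc // -natrM => /eqP.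
  rewrite subr_eq0 => /eqP /(@natr_inj0 K hc _ _) /eqP.
  by move=> /eqP e; have := congr1 odd e; rewrite oddS !oddM.
- by rewrite -!eq_none; apply: key.
Qed.
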